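(* Let $I$ be the tridendriform ideal of $\mathcal{A}$ generated by $\{x\cdot y: x,y\in\mathcal{A}^+\}$. Then $I$ is a $(3,2)$-dendriform biideal of $(\mathcal{A},\prec,\cdot,\succ,\Delta_\leftarrow,\Delta_\rightarrow)$: it is a tridendriform ideal, $\varepsilon(I)=0$, and $\Delta_\leftarrow(I)\subseteq I\otimes\mathcal{A}+\mathcal{A}\otimes I$, $\Delta_\rightarrow(I)\subseteq I\otimes\mathcal{A}+\mathcal{A}\otimes I$.
   Context: Trees: planar rooted trees in which every internal vertex has at least two children; the root vertex hangs from a trunk edge; leaves are edges without upper vertex; $|$ is the one-leaf tree; $\mathcal A$ is the $\mathbb K$-span of all trees, $\mathcal A^+$ that of trees $\neq|$. Products: $x_0\vee\cdots\vee x_k$ ($k\ge1$) grafts trees left to right on a new root; for $x=x^{(0)}\vee\cdots\vee x^{(k)}$, $y=y^{(0)}\vee\cdots\vee y^{(l)}$: $x\prec y=x^{(0)}\vee\cdots\vee x^{(k-1)}\vee(x^{(k)}*y)$, $x\cdot y=x^{(0)}\vee\cdots\vee x^{(k-1)}\vee(x^{(k)}*y^{(0)})\vee y^{(1)}\vee\cdots\vee y^{(l)}$, $x\succ y=(x*y^{(0)})\vee y^{(1)}\vee\cdots\vee y^{(l)}$, $*=\prec+\cdot+\succ$, $|*z=z*|=z$; for $a\in\mathcal A^+$: $|\prec a=0$, $a\prec|=a$, $|\succ a=a$, $a\succ|=0$, $|\cdot a=a\cdot|=0$. $\varepsilon(|)=1$, $\varepsilon(\mathcal A^+)=0$. A tridendriform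 ideal is a subspace $J$ such that $x\ltimes y\in J$ whenever $x\in J$ or $y\in J$ (and the product is defined), for $\ltimes\in\{\prec,\cdot,\succ\}$. Admissible cuts: internal edges join two internal vertices; a cut is a nonempty set of internal edges, plus the empty and total (below the root) cuts; admissible if every root-to-leaf path meets at most one chosen edge; $P^c(t)$ the component containing the root, $G^c(t)$ the $*$-product of the cut-off trees from left to right (empty cut: $P^c=t,G^c=|$; total cut: $P^c=|,G^c=t$). For $t\ne|$: $\Delta_\leftarrow(t)=\sum G^c(t)\otimes P^c(t)$ over admissible cuts with the right-most leaf of $t$ not in $P^c(t)$, $\Delta_\rightarrow(t)$ the sum over the other admissible cuts. *)

(* Defs.v *)
From HB Require Import structures.
From mathcomp Require Import all_boot all_order all_algebra.
From mathcomp Require Import freeg.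
Set Implicit Arguments. Unset Strict Implicit. Unset Printing Implicit Defensive.
Import GRing.Theory.
Local Open Scope ring_scope.

(* Planar rooted trees in which every internal vertex has at least two children.
   [Leaf] is the one-leaf tree |; [Node x0 x1 xs] = x0 \/ x1 \/ ... (children
   x0 :: x1 :: xs, from left to right), so at least two children structurally. *)
Inductive ptree : Type :=
| Leaf : ptree
| Node : ptree -> ptree -> seq ptree -> ptree.

Fixpoint ptree_enc (t : ptree) : GenTree.tree unit :=
  match t with
  | Leaf => GenTree.Node 0 [::]
  | Node a b s => GenTree.Node 1 (ptree_enc a :: ptree_enc b :: map ptree_enc s)
  end.
Fixpoint ptree_dec (g : GenTree.tree unit) : ptree :=
  match g with
  | GenTree.Node 1 (ga :: gb :: gs) => Node (ptree_dec ga) (ptree_dec gb) (map ptree_dec gs)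
  | _ => Leaf
  end.
Fixpoint ptree_encK (t : ptree) : ptree_dec (ptree_enc t) = t :=
  match t return ptree_dec (ptree_enc t) = t with
  | Leaf => erefl
  | Node a b s =>
      f_equal3 Node (ptree_encK a) (ptree_encK b)
        ((fix go (s : seq ptree) : map ptree_dec (map ptree_enc s) = s :=
            match s return map ptree_dec (map ptree_enc s) = s with
            | [::] => erefl
            | x :: s' => f_equal2 cons (ptree_encK x) (go s')
            end) s)
  end.
Lemma ptree_encK' : cancel ptree_enc ptree_dec. Proof. exact: ptree_encK. Qed.
HB.instance Definition _ := Equality.copy ptree (can_type ptree_encK').
HB.instance Definition _ := Countable.copy ptree (can_type ptree_encK').

Definition graft (cs : seq ptree) : ptree :=
  match cs with a :: b :: r => Node a b r | _ => Leaf (* unused junk *) end.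

(* number of vertices + leaves; used only as fuel *)
Fixpoint tsize (t : ptree) : nat :=
  match t with
  | Leaf => 1
  | Node a b s => (tsize a + tsize b + sumn (map tsize s)).+1
  end.

Section Alg.
Variable K : fieldType.

(* the vector space A = K-span of all trees; A (x) A = K-span of pairs of trees *)
Definition A := {freeg ptree / K}.
Definition A2 := {freeg (ptree * ptree) / K}.
Definition bt (t : ptree) : A := << t >>.

(* (x < y, x . y, x > y) on trees, computed with fuel *)
Fixpoint tri (n : nat) (x y : ptree) : A * A * A :=
  match n with
  | 0 => (0, 0, 0)
  | n'.+1 =>
    let st u v :=
      match u, v with
      | Leaf, _ => bt v
      | _, Leaf => bt u
      | _, _ => let: (p, d, s) := tri n' u v in p + d + s
      end in
    match x, y with
    | Node a b s, Node c d r =>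
        let xk := last b s in
        let ini := belast a (b :: s) in
        (fglift (fun z => bt (graft (rcons ini z))) (st xk y),
         fglift (fun z => bt (graft (ini ++ z :: d :: r))) (st xk c),
         fglift (fun z => bt (graft (z :: d :: r))) (st x c))
    | Leaf, Node _ _ _ => (0, 0, bt y)
    | Node _ _ _, Leaf => (bt x, 0, 0)
    | Leaf, Leaf => (0, 0, 0)            (* undefined in the paper; junk *)
    end
  end.

Definition prec_t (x y : ptree) : A := (tri (tsize x + tsize y) x y).1.1.
Definition dot_t (x y : ptree) : A := (tri (tsize x + tsize y) x y).1.2.
Definition succ_t (x y : ptree) : A := (tri (tsize x + tsize y) x y).2.
Definition star_t (x y : ptree) : A :=
  match x, y with
  | Leaf, _ => bt y
  | _, Leaf => bt x
  | _, _ => prec_t x y + dot_t x y + succ_t x y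
  end.

Definition bilin (f : ptree -> ptree -> A) (u v : A) : A :=
  fglift (fun s => fglift (fun t => f s t) v) u.
Definition precv := bilin prec_t.
Definition dotv := bilin dot_t.
Definition succv := bilin succ_t.
Definition starv := bilin star_t.

Definition tens (u v : A) : A2 :=
  fglift (fun s => fglift (fun t => (<< (s, t) >> : A2)) v) u.

Definition eps (v : A) : K := coeff Leaf v.
Definition inAplus (v : A) : Prop := coeff Leaf v = 0.

(* non-total admissible cuts of a tree (the empty cut included), as triples
   (P^c(t), list of cut-off trees from left to right, "right-most leaf of t
   lies in P^c(t)").  A cut edge must be internal: it goes to a child that is
   an internal vertex. *)
Fixpoint cprod (X : Type) (ls : seq (seq X)) : seq (seq X) :=
  match ls with
  | [::] => [:: [::]]
  | l :: ls' => [seq x :: y | x <- l, y <- cprod ls']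
  end.

Definition combine_cut (l : seq (ptree * seq ptree * bool)) :=
  (graft [seq c.1.1 | c <- l], flatten [seq c.1.2 | c <- l], last true [seq c.2 | c <- l]).

Fixpoint cuts (t : ptree) : seq (ptree * seq ptree * bool) :=
  match t with
  | Leaf => [:: (Leaf, [::], true)]
  | Node a b s =>
      let opt c := (if c is Node _ _ _ then [:: (Leaf, [:: c], false)] else [::])
                   ++ cuts c in
      [seq combine_cut l | l <- cprod (opt a :: opt b :: map opt s)]
  end.

Definition Gprod (gs : seq ptree) : A := foldr (fun t acc => starv (bt t) acc) (bt Leaf) gs.

(* Delta_<- and Delta_-> on trees t <> | (junk value 0 on |) *)
Definition DeltaL_t (t : ptree) : A2 :=
  if t is Leaf then 0 else
  tens (bt t) (bt Leaf) (* total cut *)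
  + \sum_(c <- cuts t | ~~ c.2) tens (Gprod c.1.2) (bt c.1.1).
Definition DeltaR_t (t : ptree) : A2 :=
  if t is Leaf then 0 else
  \sum_(c <- cuts t | c.2) tens (Gprod c.1.2) (bt c.1.1).
Definition DeltaL (v : A) : A2 := fglift DeltaL_t v.
Definition DeltaR (v : A) : A2 := fglift DeltaR_t v.

(* tridendriform ideal: a subspace J such that x <| y in J whenever x in J or
   y in J and the product is defined (i.e. not both x and y have a | part) *)
Definition tri_ideal (J : A -> Prop) : Prop :=
  [/\ J 0, (forall u v, J u -> J v -> J (u + v)), (forall (k : K) u, J u -> J (k *: u)) &
   forall x y, (inAplus x \/ inAplus y) -> (J x \/ J y) ->
     [/\ J (precv x y), J (dotv x y) & J (succv x y)]].

Definition gen_ideal (v : A) : Prop :=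
  forall J, tri_ideal J -> (forall x y, inAplus x -> inAplus y -> J (dotv x y)) -> J v.

Definition tens_sum (J : A -> Prop) (w : A2) : Prop :=
  exists l : seq (A * A), (forall p, p \in l -> J p.1 \/ J p.2) /\
    w = \sum_(p <- l) tens p.1 p.2.

End Alg.

(* Main.v *)
Require Import Defs.
From HB Require Import structures.
From mathcomp Require Import all_boot all_order all_algebra.
From mathcomp Require Import freeg.
From Stdlib Require List.
Set Implicit Arguments. Unset Strict Implicit. Unset Printing Implicit Defensive.
Import GRing.Theory.
Local Open Scope ring_scope.

HB.instance Definition _ (R : ringType) (M : lmodType R) (T : choiceType) (f : T -> M) :=
  GRing.isAdditive.Build {freeg T / R} M (fglift f) (lift_is_additive f).

Section S.
Variables (R : ringType) (M : lmodType R) (T : choiceType) (f : T -> M).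

Lemma fglift_sum (D : {freeg T / R}) : fglift f D = \sum_(z <- dom D) coeff z D *: f z.
Proof.
rewrite -{1}(freeg_sumE D) raddf_sum /=; apply: eq_bigr => z _; exact: liftU.
Qed.

Lemma fglift_scale (c : R) (D : {freeg T / R}) : fglift f (c *: D) = c *: fglift f D.
Proof.
have -> : c *: D = fgscale c D by [].
rewrite /fgscale raddf_sum (fglift_sum D) scaler_sumr; apply: eq_bigr => z _.
by rewrite scalerA; exact: (liftU f).
Qed.

Lemma freegZU (c : R) (z : T) : << c *g z >> = c *: (<< z >> : {freeg T / R}).
Proof. by apply/eqP/freeg_eqP => x; rewrite coeffZ !coeffU mul1r. Qed.
End S.

Fixpoint nb (t : ptree) : bool :=
  match t with Leaf => false | Node a b s => (s != [::]) || nb a || nb b || has nb s end.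

Lemma nb_graft l : (2 <= size l)%N -> nb (graft l) = (2 < size l)%N || has nb l.
Proof.
case: l => [|a [|b s]] //= _.
by case: s => [|e s] //=; rewrite ?orbF ?orbA.
Qed.

Section K.
Variable K : fieldType.
Local Notation A := (A K).
Local Notation bt := (bt K).

Definition Nv (v : A) := forall t, t \in dom v -> nb t.

Lemma Nv0 : Nv 0. Proof. by move=> t; rewrite dom0. Qed.
Lemma NvD u v : Nv u -> Nv v -> Nv (u + v).
Proof. by move=> hu hv t /domD_subset; rewrite mem_cat => /orP [/hu|/hv]. Qed.
Lemma NvZ (k : K) u : Nv u -> Nv (k *: u).
Proof. by move=> hu t /domZ_subset /hu. Qed.
Lemma Nv_bt t : nb t -> Nv (bt t).
Proof. by move=> h z; rewrite /bt domU1 inE => /eqP ->. Qed.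
Lemma Nv_sum (I : eqType) (r : seq I) (F : I -> A) :
  (forall i, i \in r -> Nv (F i)) -> Nv (\sum_(i <- r) F i).
Proof.
elim: r => [|i r IH] h; first by rewrite big_nil; exact: Nv0.
rewrite big_cons; apply: NvD; first by apply: h; rewrite inE eqxx.
by apply: IH => j hj; apply: h; rewrite inE hj orbT.
Qed.
Lemma Nv_fglift (T : choiceType) (f : T -> A) (w : {freeg T / K}) :
  (forall z, z \in dom w -> Nv (f z)) -> Nv (fglift f w).
Proof. move=> h; rewrite fglift_sum; apply: Nv_sum => z hz; apply: NvZ; exact: h. Qed.


Definition triP n := forall x y, nb x || nb y ->
  [/\ Nv (tri K n x y).1.1, Nv (tri K n x y).1.2 & Nv (tri K n x y).2].

Lemma stN n u v : triP n -> nb u || nb v ->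
  Nv (match u, v with
      | Leaf, _ => bt v
      | _, Leaf => bt u
      | _, _ => let: (p, d, s) := tri K n u v in p + d + s
      end).
Proof.
move=> IH; case: u => [|a b s]; case: v => [|c d r] h.
- by [].
- by apply: Nv_bt; move: h.
- by apply: Nv_bt; move: h; rewrite /= orbF.
- have := IH _ _ h; case: (tri K n _ _) => [[p q] w] /= [h1 h2 h3].
  by apply: NvD => //; apply: NvD.
Qed.

Lemma Nv_fgl (w : A) (G : ptree -> ptree) :
  (forall z, z \in dom w -> nb (G z)) -> Nv (fglift (fun z => bt (G z)) w).
Proof. by move=> h; apply: Nv_fglift => z hz; apply: Nv_bt; apply: h. Qed.

Lemma nb_rcons ini z z' : (1 <= size ini)%N -> nb (graft (rcons ini z')) ->
  (nb z' -> nb z) -> nb (graft (rcons ini z)).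
Proof.
move=> hs; rewrite !nb_graft ?size_rcons ?ltnS // !has_rcons.
case: (nb z') => h1 h2; first by rewrite h2 ?orbT.
by move: h1 => /orP [->|/orP [//|->]]; rewrite ?orbT.
Qed.

Lemma triN n : triP n.
Proof.
elim: n => [|n IH] x y hxy; first by split; exact: Nv0.
case: x hxy => [|a b s]; case: y => [|c d r] hxy; cbn [tri fst snd].
- by [].
- by split; [exact: Nv0|exact: Nv0|apply: Nv_bt; move: hxy].
- by split; [apply: Nv_bt; move: hxy; rewrite /= orbF|exact: Nv0|exact: Nv0].
have hini : (1 <= size (belast a (b :: s)))%N by rewrite size_belast.
have ex : nb (Node a b s) = nb (graft (rcons (belast a (b :: s)) (last b s))).
  by rewrite -[last b s]/(last a (b :: s)) -lastI.
split.
- case hx: (nb (last b s) || nb (Node c d r)).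
  + apply: Nv_fgl => z /(stN IH hx) hz.
    by rewrite nb_graft ?size_rcons ?ltnS // has_rcons hz orbT.
  + apply: Nv_fgl => z _; apply: (nb_rcons (z' := last b s)) => //.
    * by rewrite -ex; move: hxy hx; case: (nb (Node a b s)) => //= ->; rewrite orbT.
    * by move: hx; case: (nb (last b s)).
- apply: Nv_fgl => z _; rewrite nb_graft size_cat /= ?addnS ?ltnS ?addnS ?ltnS //.
- case hx: (nb (Node a b s) || nb c).
  + by apply: Nv_fgl => z /(stN IH hx) hz /=; rewrite hz ?orbT.
  + apply: Nv_fgl => z _ /=; move/norP: hx => [/negbTE hn /negbTE hc].
    move: hxy; rewrite hn /= hc orbF => /orP [/orP [->|->]|->]; by rewrite ?orbT.
Qed.

Lemma dotN n x y : Nv (tri K n x y).1.2.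
Proof.
case: n => [|n]; first exact: Nv0.
case: x => [|a b s]; case: y => [|c d r]; cbn [tri fst snd]; try exact: Nv0.
have hini : (1 <= size (belast a (b :: s)))%N by rewrite size_belast.
apply: Nv_fgl => z _; rewrite nb_graft size_cat /= ?addnS ?ltnS ?addnS ?ltnS //.
Qed.



Lemma bilinN f (x y : A) : (forall s t, s \in dom x -> t \in dom y -> Nv (f s t)) ->
  Nv (bilin f x y).
Proof.
move=> h; apply: Nv_fglift => s hs; apply: Nv_fglift => t ht; exact: h.
Qed.

Lemma tri_S x y : exists n, (Defs.tsize x + Defs.tsize y = n.+1)%N.
Proof. by case: x => [|a b s] /=; eexists; rewrite addSn. Qed.

Lemma prec_tN s t : nb s || nb t -> Nv (prec_t K s t).
Proof. by move=> h; case: (@triN (Defs.tsize s + Defs.tsize t) s t h). Qed.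
Lemma succ_tN s t : nb s || nb t -> Nv (succ_t K s t).
Proof. by move=> h; case: (@triN (Defs.tsize s + Defs.tsize t) s t h). Qed.
Lemma dot_tN s t : Nv (dot_t K s t).
Proof. exact: dotN. Qed.

Lemma star_tN s t : nb s || nb t -> Nv (star_t K s t).
Proof.
case: s => [|a b s]; case: t => [|c d r] h.
- by [].
- by apply: Nv_bt; move: h.
- by apply: Nv_bt; move: h; rewrite /= orbF.
- rewrite /star_t; apply: NvD; first apply: NvD.
  + exact: prec_tN.
  + exact: dot_tN.
  + exact: succ_tN.
Qed.

Lemma starv_btN t w : nb t \/ Nv w -> Nv (starv (bt t) w).
Proof.
move=> h; apply: bilinN => s u; rewrite /bt domU1 inE => /eqP -> hu.
apply: star_tN; case: h => [->//|/(_ u hu) ->]; by rewrite orbT.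
Qed.

Lemma GprodN gs : has nb gs -> Nv (Gprod K gs).
Proof.
elim: gs => [|t gs IH] //= /orP [h|h]; apply: starv_btN; [left|right] => //.
exact: IH.
Qed.

Definition optc (c : ptree) : seq (ptree * seq ptree * bool) :=
  (if c is Node _ _ _ then [:: (Leaf, [:: c], false)] else [::]) ++ cuts c.

Lemma cuts_node a b s :
  cuts (Node a b s) = [seq combine_cut l | l <- cprod (map optc (a :: b :: s))].
Proof. by []. Qed.

Lemma cprod_size (X : eqType) (L : seq (seq X)) l : l \in cprod L -> size l = size L.
Proof.
elim: L l => [|Y L IH] l /=; first by rewrite inE => /eqP ->.
by move/allpairsP => [[x y] [hx hy ->]] /=; rewrite (IH _ hy).
Qed.

Lemma cprod_has cs l : l \in cprod (map optc cs) ->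
  (forall ch c, Stdlib.Lists.List.In ch cs -> c \in optc ch -> nb ch -> nb c.1.1 || has nb c.1.2) ->
  has nb cs -> has nb [seq c.1.1 | c <- l] || has nb (flatten [seq c.1.2 | c <- l]).
Proof.
elim: cs l => [|ch cs IH] l //=.
move/allpairsP => [[x y] [hx hy ->]] H /= /orP [hch | hcs].
- have := H ch x (or_introl erefl) hx hch.
  by case/orP => h; rewrite ?h //= has_cat h /= orbT.
- have := IH y hy (fun ch' c h => H ch' c (or_intror h)) hcs.
  by case/orP => h; rewrite ?h ?orbT //= has_cat h !orbT.
Qed.

Definition ptree_ind' (P : ptree -> Prop) (HL : P Leaf)
  (HN : forall a b s, P a -> P b -> (forall x, Stdlib.Lists.List.In x s -> P x) -> P (Node a b s)) :
  forall t, P t :=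
  fix F t := match t with
  | Leaf => HL
  | Node a b s => HN a b s (F a) (F b)
      ((fix G s := match s return forall x, Stdlib.Lists.List.In x s -> P x with
        | [::] => fun x H => False_ind _ H
        | y :: s' => fun x H => match H with
                     | or_introl e => eq_ind y P (F y) x e
                     | or_intror H' => G s' x H' end end) s)
  end.

Lemma cuts_nb t : forall c, c \in cuts t -> nb t -> nb c.1.1 || has nb c.1.2.
Proof.
elim/ptree_ind': t => [|a b s IHa IHb IHs] c //.
rewrite cuts_node => /mapP [l hl ->] hn.
have hs := cprod_size hl; rewrite size_map /= in hs.
rewrite /combine_cut /= nb_graft size_map hs //.
have : nb (graft (a :: b :: s)) by [].
rewrite nb_graft //= => /orP [->//|hh].
have := cprod_has hl _ hh; case/(_ _)/orP => [ch c' hin|->|->]; rewrite ?orbT //.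
rewrite /optc mem_cat; case: ch hin => [|p q w] hin; first by rewrite /=.
rewrite inE => /orP [/eqP -> hn0|hc hnb]; first by rewrite /= orbF; exact: hn0.
case: hin => [e|[e|hin]]; last exact: (IHs _ hin).
- by rewrite -e in hc hnb; exact: IHa.
- by rewrite -e in hc hnb; exact: IHb.
Qed.

End K.

Section K.
Variable K : fieldType.
Local Notation A := (A K).
Local Notation bt := (bt K).
Local Notation I := (@gen_ideal K).

Lemma gen_tri : tri_ideal I.
Proof.
split.
- by move=> J [h0 _ _ _] _.
- move=> u v hu hv J hJ hg; case: (hJ) => _ hD _ _; apply: hD; [exact: hu|exact: hv].
- move=> k u hu J hJ hg; case: (hJ) => _ _ hZ _; apply: hZ; exact: hu.
- move=> x y hxy hI; split => J hJ hg; case: (hJ) => _ _ _ hP;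
  (have hJ' : J x \/ J y by case: hI => h; [left; exact: h J hJ hg|right; exact: h J hJ hg]);
  by case: (hP x y hxy hJ').
Qed.

Lemma tri_sum (J : A -> Prop) (T : eqType) (r : seq T) (F : T -> A) :
  tri_ideal J -> (forall i, i \in r -> J (F i)) -> J (\sum_(i <- r) F i).
Proof.
move=> [h0 hD _ _]; elim: r => [|i r IH] h; first by rewrite big_nil.
rewrite big_cons; apply: hD; first by apply: h; rewrite inE eqxx.
by apply: IH => j hj; apply: h; rewrite inE hj orbT.
Qed.

Lemma Nv_tri : tri_ideal (@Nv K).
Proof.
split.
- exact: Nv0.
- exact: NvD.
- exact: NvZ.
- move=> x y _ h; split; apply: bilinN => s t hs ht.
  + by apply: prec_tN; case: h => [/(_ _ hs) -> // | /(_ _ ht) ->]; rewrite orbT.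
  + exact: dot_tN.
  + by apply: succ_tN; case: h => [/(_ _ hs) -> // | /(_ _ ht) ->]; rewrite orbT.
Qed.

Lemma gen_Nv v : I v -> Nv v.
Proof.
move=> h; apply: h; first exact: Nv_tri.
by move=> x y _ _; apply: bilinN => s t _ _; exact: dot_tN.
Qed.

Lemma bilin_bt f s t : bilin f (bt s) (bt t) = f s t.
Proof. by rewrite /bilin /bt !liftU !scale1r. Qed.

Lemma inAplus_bt a b s : inAplus (bt (Node a b s)).
Proof. by rewrite /inAplus /bt coeffU mul1r. Qed.

Lemma gen_bt t : nb t -> I (bt t).
Proof.
elim: t => [|a IHa b IHb s] //.
case: s => [|e s] hn.
- have [ha|hb] : nb a \/ nb b by move: hn => /=; rewrite ?orbF; case/orP; [left|right].
  + clear hn; case: a ha IHa => [|a1 a2 s2] // ha IHa.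
    have -> : bt (Node (Node a1 a2 s2) b [::]) = succv (bt (Node a1 a2 s2)) (bt (Node Leaf b [::])).
      rewrite /succv bilin_bt /succ_t; case: (tri_S (Node a1 a2 s2) (Node Leaf b [::])) => n ->.
      by cbn [tri fst snd]; rewrite /bt liftU scale1r.
    case: (@gen_tri) => _ _ _ hP.
    by case: (hP (bt (Node a1 a2 s2)) (bt (Node Leaf b [::])) (or_intror (inAplus_bt Leaf b [::])) (or_introl (IHa ha))).
  + clear hn; case: b hb IHb => [|b1 b2 s2] // hb IHb.
    have -> : bt (Node a (Node b1 b2 s2) [::]) = precv (bt (Node a Leaf [::])) (bt (Node b1 b2 s2)).
      rewrite /precv bilin_bt /prec_t; case: (tri_S (Node a Leaf [::]) (Node b1 b2 s2)) => n ->.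
      by cbn [tri fst snd]; rewrite /bt liftU scale1r.
    case: (@gen_tri) => _ _ _ hP.
    by case: (hP (bt (Node a Leaf [::])) (bt (Node b1 b2 s2)) (or_introl (inAplus_bt a Leaf [::])) (or_intror (IHb hb))).
- have -> : bt (Node a b (e :: s)) = dotv (bt (Node a b [::])) (bt (Node Leaf e s)).
    rewrite /dotv bilin_bt /dot_t; case: (tri_S (Node a b [::]) (Node Leaf e s)) => n ->.
    by cbn [tri fst snd]; case: b {IHb hn} => [|b1 b2 s2]; rewrite /bt liftU scale1r.
  by move=> J _ hg; apply: hg; apply: inAplus_bt.
Qed.

Lemma Nv_gen w : Nv w -> I w.
Proof.
move=> h; rewrite -(freeg_sumE w); apply: tri_sum; first exact: gen_tri.
move=> z hz; rewrite freegZU; case: gen_tri => _ _ hZ _; apply: hZ.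
by apply: gen_bt; apply: h.
Qed.


Lemma tens_scale (k : K) (u v : A) : tens (k *: u) v = k *: tens u v.
Proof. by rewrite /tens fglift_scale. Qed.

Section TS.
Variable J : A -> Prop.
Hypothesis hZ : forall (k : K) u, J u -> J (k *: u).

Lemma ts0 : tens_sum J 0.
Proof. by exists [::]; split => //; rewrite big_nil. Qed.

Lemma tsD w1 w2 : tens_sum J w1 -> tens_sum J w2 -> tens_sum J (w1 + w2).
Proof.
move=> [l1 [h1 ->]] [l2 [h2 ->]]; exists (l1 ++ l2); split; last by rewrite big_cat.
by move=> p; rewrite mem_cat => /orP [/h1|/h2].
Qed.

Lemma tsZ (k : K) w : tens_sum J w -> tens_sum J (k *: w).
Proof.
move=> [l [h ->]]; exists [seq (k *: p.1, p.2) | p <- l]; split.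
- move=> p /mapP [q hq ->] /=; case: (h q hq) => hq'; [left; exact: hZ|by right].
- by rewrite big_map scaler_sumr; apply: eq_bigr => p _; rewrite tens_scale.
Qed.

Lemma ts1 u v : J u \/ J v -> tens_sum J (tens u v).
Proof. by move=> h; exists [:: (u, v)]; split; [move=> p; rewrite inE => /eqP ->|rewrite big_seq1]. Qed.

Lemma ts_sum (T : eqType) (r : seq T) (P : pred T) F :
  (forall i, i \in r -> tens_sum J (F i)) -> tens_sum J (\sum_(i <- r | P i) F i).
Proof.
elim: r => [|i r IH] h; first by rewrite big_nil; exact: ts0.
rewrite big_cons; have hr : tens_sum J (\sum_(j <- r | P j) F j).
  by apply: IH => j hj; apply: h; rewrite inE hj orbT.
by case: (P i) => //; apply: tsD => //; apply: h; rewrite inE eqxx.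
Qed.
End TS.

Lemma genZ (k : K) u : I u -> I (k *: u).
Proof. by case: gen_tri => _ _ hZ _; apply: hZ. Qed.

Lemma DeltaL_tN z : nb z -> tens_sum I (DeltaL_t K z).
Proof.
case: z => [|a b s] // hz; rewrite /DeltaL_t; apply: tsD.
- by apply: ts1; left; apply: gen_bt.
- apply: ts_sum => c hc; case/orP: (cuts_nb hc hz) => h; apply: ts1.
  + by right; apply: gen_bt.
  + by left; apply: Nv_gen; apply: GprodN.
Qed.

Lemma DeltaR_tN z : nb z -> tens_sum I (DeltaR_t K z).
Proof.
case: z => [|a b s] // hz; rewrite /DeltaR_t.
apply: ts_sum => c hc; case/orP: (cuts_nb hc hz) => h; apply: ts1.
+ by right; apply: gen_bt.
+ by left; apply: Nv_gen; apply: GprodN.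
Qed.

End K.

Theorem mainTheorem17 (K : fieldType) :
  let I := @gen_ideal K in
  [/\ tri_ideal I,
      (forall v, I v -> eps v = 0),
      (forall v, I v -> tens_sum I (DeltaL v)) &
      (forall v, I v -> tens_sum I (DeltaR v))].
Proof.
move=> I; split.
- exact: gen_tri.
- move=> v /gen_Nv h; rewrite /eps; apply: coeff_outdom; apply/negP => /h //.
- move=> v /gen_Nv h; rewrite /DeltaL fglift_sum; apply: ts_sum => z hz.
  by apply: tsZ; [exact: genZ | apply: DeltaL_tN; apply: h].
- move=> v /gen_Nv h; rewrite /DeltaR fglift_sum; apply: ts_sum => z hz.
  by apply: tsZ; [exact: genZ | apply: DeltaR_tN; apply: h].
Qed.
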